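(* For every integer $s\geq1$, \[ \sum_{n_1\geq\cdots\geq n_s\geq n_{s+1}\geq2}\frac{1}{n_1(n_1-1)\cdots n_s(n_s-1)\,n_{s+1}}\leq\frac{1}{2^{s+1}}\prod_{l\geq3}\frac{1}{1-\frac{2}{l(l-1)}}+\zeta^{\star}(\{2\}^s,1)-\zeta^{\star}(\{2\}^s). \]
   Context: $\zeta^{\star}(k_1,\ldots,k_r)=\sum_{n_1\geq\cdots\geq n_r\geq 1}\frac{1}{n_1^{k_1}\cdots n_r^{k_r}}$ for $k_1\geq2$, $k_2,\ldots,k_r\geq1$; $\{2\}^s$ denotes $s$ consecutive arguments equal to $2$. *)

(* Defs.v *)
From HB Require Import structures.
From mathcomp Require Import all_boot all_order all_algebra.
From mathcomp Require Import all_classical all_reals all_analysis.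
Set Implicit Arguments. Unset Strict Implicit. Unset Printing Implicit Defensive.
Import Order.TTheory GRing.Theory Num.Theory.
Import numFieldNormedType.Exports.
Local Open Scope classical_set_scope.
Local Open Scope ring_scope.

Definition chains (r lo : nat) : set (seq nat) :=
  [set n | size n = r /\ sorted geq n /\ all (fun m => lo <= m)%N n].

Definition zeta_star (R : realType) (ks : seq nat) : \bar R :=
  (\esum_(n in chains (size ks) 1)
     (\prod_(i < size ks) ((nth 0%N n i)%:R ^- (nth 0%N ks i) : R))%:E)%E.

Definition lhs41 (R : realType) (s : nat) : \bar R :=
  (\esum_(n in chains s.+1 2)
     ((\prod_(i < s) ((nth 0%N n i)%:R * ((nth 0%N n i)%:R - 1))^-1)
        * ((nth 0%N n s)%:R)^-1 : R)%:E)%E.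

Definition prod41_partial (R : realType) : R^nat := fun L =>
  \prod_(3 <= l < L) (1 - 2 / ((l%:R : R) * (l%:R - 1)))^-1.

Definition prod41 (R : realType) : R :=
  limn (prod41_partial R).

(* Main.v *)
Require Import Defs.
From HB Require Import structures.
From mathcomp Require Import all_boot all_order all_algebra.
From mathcomp Require Import all_classical all_reals all_analysis.
From mathcomp Require Import zify ring lra.
Import Order.TTheory GRing.Theory Num.Theory.
Import numFieldNormedType.Exports.
Local Open Scope ring_scope.
Local Open Scope classical_set_scope.

Lemma geq_transT : transitive geq.
Proof. by move=> y x z /= h1 h2; apply: leq_trans h2 h1. Qed.

Lemma chains_succ r k : chains r k.+1 = map succn @` chains r k.
Proof.
apply/seteqP; split => c.
  move=> [hs [hso ha]]; exists (map predn c).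
    split; first by rewrite size_map.
    split.
      by move: hso; apply: homo_sorted => x y /=; lia.
    rewrite all_map; apply/allP => x xc /=; move/allP: ha => /(_ x xc); lia.
  rewrite -map_comp -[RHS]map_id; apply/eq_in_map => x xc /=.
  move/allP: ha => /(_ x xc); lia.
move=> [d [hs [hso ha]] <-]; split; first by rewrite size_map.
split.
  by move: hso; apply: homo_sorted => x y /=; lia.
rewrite all_map; apply/allP => x xc /=; move/allP: ha => /(_ x xc); lia.
Qed.

Lemma sorted_rcons_all d x : sorted geq (rcons d x) -> all (fun y => x <= y)%N d.
Proof.
rewrite -rev_sorted rev_rcons /= => h.
by rewrite -all_rev; apply: (order_path_min _ h) => a b c /=; lia.
Qed.

Lemma sorted_rcons_sorted d x : sorted geq (rcons d x) -> sorted geq d.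
Proof. by apply: subseq_sorted; [exact: geq_transT | exact: subseq_rcons]. Qed.

Lemma sorted_cons_all d x : sorted geq (x :: d) -> all (fun y => y <= x)%N d.
Proof. by move=> h; apply: (order_path_min _ h) => a b c /=; lia. Qed.

Lemma chains_last r k c : chains r.+1 k c -> ~ chains r.+1 k.+1 c ->
  exists2 d, chains r k d & c = rcons d k.
Proof.
case/lastP: c => [|d x]; first by case.
move=> [hs [hso ha]] hn; exists d; last first.
  congr rcons; move: (ha); rewrite all_rcons => /andP[hk _].
  case: (ltnP k x) => hkx; last by apply/eqP; rewrite eqn_leq hkx.
  exfalso; apply: hn; split => //; split => //.
  rewrite all_rcons hkx /=; apply/allP => y yd.
  by move/sorted_rcons_all/allP: hso => /(_ y yd); lia.
split; first by move: hs; rewrite size_rcons => -[].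
split; first exact: sorted_rcons_sorted hso.
by move: ha; rewrite all_rcons => /andP[].
Qed.

Lemma rcons_chains r k d : chains r k d -> chains r.+1 k (rcons d k) /\ ~ chains r.+1 k.+1 (rcons d k).
Proof.
move=> [hs [hso ha]]; split.
  split; first by rewrite size_rcons hs.
  split; last by rewrite all_rcons leqnn.
  rewrite -rev_sorted rev_rcons /=.
  rewrite -rev_sorted in hso.
  have tr : transitive (fun z : nat => geq^~ z) by move=> a b c /=; lia.
  rewrite (path_sortedE tr) hso andbT all_rev.
  by apply/allP => y yd; move/allP: ha => /(_ y yd).
by move=> [_ [_]]; rewrite all_rcons ltnn.
Qed.

Local Open Scope ereal_scope.
Section esum_helpers.
Context {R : realType} {T : choiceType}.
Implicit Types (A B : set T) (a : T -> \bar R).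

Lemma esum_sub_le A B a : B `<=` A -> (forall x, A x -> 0 <= a x) ->
  \esum_(i in B) a i <= \esum_(i in A) a i.
Proof.
move=> BA a0; rewrite (esum_mkcond B) (esum_mkcond A); apply: le_esum => i _.
case: ifPn => iB; first by rewrite ifT // inE; apply: BA; rewrite -inE.
by case: ifPn => // iA; apply: a0; rewrite -inE.
Qed.

Lemma esum_setU_le A B a : (forall x, (A `|` B) x -> 0 <= a x) ->
  \esum_(i in A `|` B) a i <= \esum_(i in A) a i + \esum_(i in B) a i.
Proof.
move=> a0; rewrite (esumID B) // addeC; apply: leeD; apply: esum_sub_le => //.
- move=> x /= [] [] // xb nb; exfalso; exact: nb.
- by move=> x hx; apply: a0; left.
- by move=> x hx; apply: a0; right.
Qed.

Lemma esumZ_le A a (c : R) : (0 <= c)%R -> (forall x, 0 <= a x) ->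
  \esum_(i in A) (c%:E * a i) <= c%:E * \esum_(i in A) a i.
Proof.
move=> c0 a0; apply: ge_ereal_sup => _ [X [finX XA] <-].
rewrite -ge0_mule_fsumr //; apply: lee_wpmul2l; first by rewrite lee_fin.
by apply: ereal_sup_ubound; exists X.
Qed.

End esum_helpers.

Section K.
Variable R : realType.

Definition aw (x : nat) : R := ((x%:R * (x%:R - 1))^-1)%R.
Definition wa (c : seq nat) : R := (\prod_(x <- c) aw x)%R.
Definition chle r n : set (seq nat) :=
  chains r 2 `&` [set c | all (fun m => m <= n)%N c].

Lemma aw_ge0 x : (0 <= aw x)%R.
Proof.
rewrite /aw invr_ge0; case: x => [|x]; first by rewrite mul0r.
by rewrite mulr_ge0 // natrS addrK.
Qed.

Lemma wa_ge0 c : (0 <= wa c)%R.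
Proof. by apply: prodr_ge0 => x _; apply: aw_ge0. Qed.

Lemma chle_nil n : chle 0 n = [set [::]].
Proof.
apply/seteqP; split => c.
  by move=> [[/size0nil -> _] _].
by move=> /= ->.
Qed.

Lemma chle_1 r : chle r.+1 1 = set0.
Proof.
apply/seteqP; split => c // [[hs [_ ha]] /= hb].
case: c hs ha hb => [|x c] //= _ /andP[h1 _] /andP[h2 _]; lia.
Qed.

Lemma chle_rec r n :
  chle r.+1 n.+1 `<=` chle r.+1 n `|` (cons n.+1) @` chle r n.+1.
Proof.
case=> [|x c] [[hs [hso ha]] /= hb]; first by [].
move: hb => /andP[hx hc].
case: (ltnP n x) => hnx.
  right; exists c; last by have -> : x = n.+1 by apply/eqP; rewrite eqn_leq hx hnx.
  split; last by [].
  split; first by case: hs.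
  split; first exact: path_sorted hso.
  by move: ha => /andP[].
left; split; first by [].
rewrite /= hnx /=; apply/allP => y yc.
by move/sorted_cons_all/allP: hso => /(_ y yc); lia.
Qed.

Let K r n := \esum_(c in chle r n) (wa c)%:E.

Lemma K_rec r n : K r.+1 n.+1 <= K r.+1 n + (aw n.+1)%:E * K r n.+1.
Proof.
rewrite /K; apply: le_trans (esum_sub_le _ _ _ (chle_rec r n) _) _.
  by move=> c _; rewrite lee_fin wa_ge0.
apply: le_trans (esum_setU_le _ _ _ _) _.
  by move=> c _; rewrite lee_fin wa_ge0.
apply: leeD2l; rewrite esum_image; last by move=> a b _ _ [].
rewrite (eq_esum (b := fun c => (aw n.+1)%:E * (wa c)%:E)); last first.
  by move=> c _; rewrite /wa big_cons EFinM.
by apply: esumZ_le; [exact: aw_ge0 | move=> c; rewrite lee_fin wa_ge0].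
Qed.

Lemma K0 n : K 0 n = 1.
Proof. by rewrite /K chle_nil esum_set1 ?lee_fin ?wa_ge0 // /wa big_nil. Qed.

Lemma K2 r : K r 2 <= ((2^-1) ^+ r)%:E.
Proof.
elim: r => [|r IH]; first by rewrite K0 expr0.
apply: le_trans (K_rec r 1) _.
rewrite /K chle_1 esum_set0 add0e -/(K r 2).
apply: le_trans (lee_wpmul2l _ IH) _; first by rewrite lee_fin aw_ge0.
rewrite -EFinM lee_fin exprS.
have -> : aw 2 = (2^-1)%R by rewrite /aw; congr GRing.inv; ring.
by [].
Qed.


Definition qq (n : nat) : R := (3 * (n%:R - 1) / (n%:R + 1))%R.

Lemma qq_step (m t : R) : (0 <= m)%R ->
  (2^-1 * t * (3 * ((m + 2) - 1) / ((m + 2) + 1)) +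
   ((m + 3) * ((m + 3) - 1))^-1 * (t * (3 * ((m + 3) - 1) / ((m + 3) + 1))) =
   2^-1 * t * (3 * ((m + 3) - 1) / ((m + 3) + 1)))%R.
Proof. by move=> m0; field; lra. Qed.

Lemma Kn n r : K r n.+2 <= ((2^-1) ^+ r * qq n.+2)%:E.
Proof.
elim: n r => [|n IHn] r.
  have -> : qq 2 = 1%R by rewrite /qq; field.
  by rewrite mulr1; apply: K2.
elim: r => [|r IHr].
  rewrite K0 expr0 mul1r lee_fin /qq.
  rewrite ler_pdivlMr; last by rewrite ltr_pwDl.
  rewrite mul1r -[n.+3]addn3 natrD; have := ler0n R n; lra.
apply: le_trans (K_rec r n.+2) _.
apply: le_trans (leeD (IHn r.+1) (lee_wpmul2l _ IHr)) _.
  by rewrite lee_fin aw_ge0.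
rewrite -EFinM -EFinD lee_fin /qq /aw exprS.
have h2 : (0 < (2^-1 : R) ^+ r)%R by rewrite exprn_gt0 // invr_gt0.
set t := ((2^-1 : R) ^+ r)%R.
rewrite -[n.+3]addn3 -[n.+2]addn2 !natrD.
set m := (n%:R : R).
have m0 : (0 <= m)%R by rewrite /m ler0n.
by rewrite qq_step.
Qed.
Lemma Kall r : \esum_(c in chains r 2) (wa c)%:E <= ((2^-1) ^+ r * 3)%:E.
Proof.
rewrite {1}/esum; apply: ge_ereal_sup => _ [X [finX XA] <-].
have [B XB] := finite_fsetP.1 finX.
pose n := (\max_(c <- finmap.enum_fset B) \max_(x <- c) x)%N.
have XK : X `<=` chle r n.+2.
  move=> c Xc; split; first exact: XA.
  have cB : c \in finmap.enum_fset B by move: Xc; rewrite XB.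
  apply/allP => x xc.
  have h1 := leq_bigmax_seq (F := id) x xc isT.
  have h2 := leq_bigmax_seq (F := fun c => \max_(x <- c) x)%N c cB isT.
  have := leq_trans h1 h2; rewrite /n /=; lia.
have h1 : \sum_(i \in X) (wa i)%:E <= K r n.+2.
  by apply: ereal_sup_ubound; exists X.
apply: le_trans h1 _; apply: le_trans (Kn n r) _.
rewrite lee_fin ler_wpM2l ?exprn_ge0 ?invr_ge0 // /qq.
rewrite ler_pdivrMr; last by rewrite ltr_pwDl.
have := ler0n R n.+2; lra.
Qed.
End K.
Local Close Scope ereal_scope.

Lemma p41_step (R : realType) (m : R) : (0 <= m)%R ->
  3 * (m + 1) / (m + 3) * (1 - 2 / ((m + 3) * (m + 3 - 1)))^-1 = 3 * (m + 2) / (m + 4).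
Proof.
move=> m0.
have -> : (1 - 2 / ((m + 3) * (m + 3 - 1))) = (m + 1) * (m + 4) / ((m + 3) * (m + 2)).
  by field; lra.
rewrite invf_div; field; lra.
Qed.

Lemma p41_formula (R : realType) n :
  prod41_partial R n.+3 = 3 - 6 * harmonic n.+2.
Proof.
rewrite /harmonic /=.
suff -> : prod41_partial R n.+3 = 3 * (n%:R + 1) / (n%:R + 3).
  rewrite -[n.+3]addn3 natrD; have := ler0n R n; move=> h; field; lra.
elim: n => [|n IH].
  by rewrite /prod41_partial big_geq //; field.
rewrite /prod41_partial (big_nat_recr n.+3) //= -/(prod41_partial R n.+3) IH.
rewrite -[n.+3]addn3 -[n.+1]addn1 !natrD.
have h := ler0n R n.
rewrite p41_step //; field; lra.
Qed.


Local Open Scope classical_set_scope.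
Lemma prod41E (R : realType) : prod41 R = 3.
Proof.
rewrite /prod41; apply: cvg_lim => //.
rewrite -(cvg_shiftn 3).
have h : [sequence @harmonic R (n + 2)]_n @ \oo --> 0.
  by rewrite cvg_shiftn; exact: cvg_harmonic.
have -> : [sequence prod41_partial R (n + 3)]_n =
   (fun n => 3 - 6 * [sequence @harmonic R (n + 2)]_n n).
  apply/funext => n; rewrite /=.
  rewrite (_ : prod41_partial R (n+3) = prod41_partial R n.+3); last first.
    by congr prod41_partial; lia.
  rewrite p41_formula /=.
  by rewrite (_ : (n + 2).+1 = n.+3)%N //; lia.
have h2 : (fun n => 6 * [sequence @harmonic R (n + 2)]_n n) @ \oo --> (6 * 0 : R).
  exact: cvgMl_tmp.
have h3 : (fun n => 3 - 6 * [sequence @harmonic R (n + 2)]_n n) @ \oo --> (3 - 6 * 0 : R).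
  by apply: cvgB => //; exact: cvg_cst.
by rewrite mulr0 subr0 in h3.
Qed.
Local Open Scope classical_set_scope.

Section Main.
Variable R : realType.

Definition fL s (c : seq nat) : R :=
  ((\prod_(i < s) ((nth 0%N c i)%:R * ((nth 0%N c i)%:R - 1))^-1) * ((nth 0%N c s)%:R)^-1)%R.

Definition gz (ks : seq nat) (c : seq nat) : R :=
  (\prod_(i < size ks) ((nth 0%N c i)%:R ^- (nth 0%N ks i)))%R.

Lemma prod_nth (F : nat -> R) (d : seq nat) s : size d = s ->
  (\prod_(i < s) F (nth 0%N d i) = \prod_(x <- d) F x)%R.
Proof. by move=> <-; rewrite (big_nth 0%N) big_mkord. Qed.

Lemma fL_ge0 s c : (0 <= fL s c)%R.
Proof.
rewrite /fL mulr_ge0 ?invr_ge0 ?ler0n //.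
by apply: prodr_ge0 => i _; exact: (aw_ge0 R).
Qed.

Lemma fL_rcons2 s d : size d = s -> fL s (rcons d 2%N) = (2^-1 * wa R d)%R.
Proof.
move=> hd; rewrite /fL mulrC nth_rcons hd ltnn eqxx; congr (_ * _).
rewrite /wa -(prod_nth _ _ _ hd); apply: eq_bigr => i _.
by rewrite nth_rcons hd ltn_ord.
Qed.

Lemma gz1_split s c : gz (rcons (nseq s 2%N) 1%N) c =
  ((\prod_(i < s) ((nth 0%N c i)%:R ^- 2)) * (nth 0%N c s)%:R ^- 1)%R.
Proof.
rewrite /gz size_rcons size_nseq big_ord_recr /=; congr (_ * _).
  by apply: eq_bigr => i _; rewrite nth_rcons size_nseq ltn_ord nth_nseq ltn_ord.
by rewrite nth_rcons size_nseq ltnn eqxx.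
Qed.

Lemma gz0_split s c : gz (nseq s 2%N) c = (\prod_(i < s) ((nth 0%N c i)%:R ^- 2))%R.
Proof.
rewrite /gz size_nseq; apply: eq_bigr => i _; by rewrite nth_nseq ltn_ord.
Qed.

Lemma gz_ge0 ks c : (0 <= gz ks c)%R.
Proof. by apply: prodr_ge0 => i _; rewrite invr_ge0 exprn_ge0 ?ler0n. Qed.

Lemma L1 (x : R) : (1 <= x)%R -> (((x + 1) * (x + 1 - 1))^-1 <= (x ^+ 2)^-1)%R.
Proof.
move=> x1; rewrite addrK lef_pV2 ?posrE ?expr2; nra.
Qed.

Lemma L2 (x : R) : (1 <= x)%R -> ((x + 1)^-1 <= (x ^+ 1)^-1)%R.
Proof. by move=> x1; rewrite expr1 lef_pV2 ?posrE; try lra. Qed.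

Lemma L3 (x : R) : (1 <= x)%R -> ((x ^+ 2)^-1 <= 2 * ((x + 1) * (x + 1 - 1))^-1)%R.
Proof.
move=> x1; rewrite addrK.
have -> : (2 / ((x + 1) * x) = (2^-1 * ((x + 1) * x))^-1)%R by rewrite [RHS]invfM invrK.
rewrite lef_pV2 ?posrE ?expr2; try nra.
Qed.

Local Open Scope ereal_scope.

Lemma nth_ge1 r k c i : chains r k.+1 c -> (i < r)%N -> (1 <= (nth 0%N c i)%:R :> R)%R.
Proof.
move=> [hs [_ ha]] hi; have hi' : (i < size c)%N by rewrite hs.
have := allP ha _ (mem_nth 0%N hi'); rewrite /= ler1n; lia.
Qed.

Lemma E3_le s : \esum_(c in chains s.+1 3) (fL s c)%:E <=
  \esum_(c in chains s.+1 2) (gz (rcons (nseq s 2%N) 1%N) c)%:E.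
Proof.
rewrite chains_succ esum_image; last by move=> a b _ _; apply: (inj_map succn_inj).
apply: le_esum => c hc; rewrite lee_fin gz1_split /fL.
have [hs _] := hc.
have nthS i : (i < s.+1)%N -> nth 0%N (map succn c) i = (nth 0%N c i).+1.
  by move=> hi; rewrite (nth_map 0%N) // hs.
apply: ler_pM.
- by apply: prodr_ge0 => i _; exact: (aw_ge0 R).
- by rewrite invr_ge0 ler0n.
- apply: ler_prod => i _; apply/andP; split; first exact: (aw_ge0 R).
  rewrite nthS; last by apply: (leq_trans (ltn_ord i)).
  rewrite -addn1 natrD; apply: L1; exact: (nth_ge1 _ _ _ i hc (leq_trans (ltn_ord i) (leqnSn s))).
- rewrite nthS // -addn1 natrD; apply: L2; exact: (nth_ge1 _ _ _ s hc).
Qed.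

Lemma E2_le s : \esum_(c in chains s.+1 2 `&` ~` chains s.+1 3) (fL s c)%:E <=
  (2^-1)%:E * \esum_(d in chains s 2) (wa R d)%:E.
Proof.
apply: le_trans (esum_sub_le ((fun d => rcons d 2%N) @` chains s 2)
   (chains s.+1 2 `&` ~` chains s.+1 3) _ _ _) _.
- move=> c [hc hn]; have [d hd ->] := chains_last _ _ _ hc hn; by exists d.
- by move=> c _; rewrite lee_fin fL_ge0.
rewrite esum_image; last by move=> a b _ _; apply: rcons_injl.
rewrite (eq_esum (b := fun d => (2^-1)%:E * (wa R d)%:E)); last first.
  by move=> d [hs _]; rewrite fL_rcons2 // EFinM.
apply: esumZ_le; first by rewrite invr_ge0.
by move=> d; rewrite lee_fin (wa_ge0 R).
Qed.

Lemma Z1_ge s :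
  \esum_(c in chains s 1) (gz (nseq s 2%N) c)%:E +
  \esum_(c in chains s.+1 2) (gz (rcons (nseq s 2%N) 1%N) c)%:E <=
  \esum_(c in chains s.+1 1) (gz (rcons (nseq s 2%N) 1%N) c)%:E.
Proof.
rewrite [leRHS](esumID (chains s.+1 2)); last by move=> c _; rewrite lee_fin gz_ge0.
rewrite [leRHS]addeC; apply: leeD.
  have -> : \esum_(c in chains s 1) (gz (nseq s 2%N) c)%:E =
     \esum_(c in (fun d => rcons d 1%N) @` chains s 1)
        (gz (rcons (nseq s 2%N) 1%N) c)%:E.
    rewrite esum_image; last by move=> a b _ _; apply: rcons_injl.
    apply: eq_esum => d [hs _]; congr EFin.
    rewrite gz1_split gz0_split nth_rcons hs ltnn eqxx expr1 invr1 mulr1.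
    by apply: eq_bigr => i _; rewrite nth_rcons hs ltn_ord.
  apply: esum_sub_le; last by move=> c _; rewrite lee_fin gz_ge0.
  by move=> c [d hd <-]; exact: rcons_chains.
apply: esum_sub_le; last by move=> c _; rewrite lee_fin gz_ge0.
move=> c hc; split => //; have [hs [hso ha]] := hc; split => //; split => //.
by apply/allP => x xc; have := allP ha x xc; lia.
Qed.

Lemma Z0_le s : \esum_(c in chains s 1) (gz (nseq s 2%N) c)%:E <=
  (2 ^+ s)%:E * \esum_(d in chains s 2) (wa R d)%:E.
Proof.
rewrite (chains_succ s 1) esum_image; last by move=> a b _ _; apply: (inj_map succn_inj).
apply: le_trans (esumZ_le _ _ _ _ _); last 2 first.
- by rewrite exprn_ge0.
- by move=> d; rewrite lee_fin (wa_ge0 R).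
apply: le_esum => d hd; rewrite -EFinM lee_fin gz0_split.
have [hs _] := hd.
rewrite /wa -(prod_nth _ _ s); last by rewrite size_map.
have -> : (2 ^+ s = \prod_(i < s) (2:R))%R by rewrite prodr_const card_ord.
rewrite -big_split /=.
apply: ler_prod => i _; apply/andP; split.
  by rewrite invr_ge0 exprn_ge0 ?ler0n.
rewrite (nth_map 0%N); last by rewrite hs.
rewrite /aw -[(nth 0%N d i).+1]addn1 natrD; apply: L3; exact: (nth_ge1 _ _ _ i hd).
Qed.

End Main.
Local Open Scope classical_set_scope.

Theorem lemma4p1 (R : realType) (s : nat) (hs : (1 <= s)%N) :
  (lhs41 R s <=
     ((2 ^+ s.+1)^-1 * prod41 R)%:E
     + zeta_star R (rcons (nseq s 2%N) 1%N) - zeta_star R (nseq s 2%N))%E.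
Proof.
have eL : lhs41 R s = (\esum_(c in chains s.+1 2) (fL R s c)%:E)%E by [].
have eZ1 : zeta_star R (rcons (nseq s 2%N) 1%N) =
    (\esum_(c in chains s.+1 1) (gz R (rcons (nseq s 2%N) 1%N) c)%:E)%E.
  by rewrite /zeta_star /gz size_rcons size_nseq.
have eZ0 : zeta_star R (nseq s 2%N) =
    (\esum_(c in chains s 1) (gz R (nseq s 2%N) c)%:E)%E.
  by rewrite /zeta_star /gz size_nseq.
rewrite eL eZ1 eZ0 prod41E.
set K := (\esum_(d in chains s 2) (wa R d)%:E)%E.
set Z0 := (\esum_(c in chains s 1) (gz R (nseq s 2%N) c)%:E)%E.
set Z1 := (\esum_(c in chains s.+1 1) (gz R (rcons (nseq s 2%N) 1%N) c)%:E)%E.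
set W := (\esum_(c in chains s.+1 2) (gz R (rcons (nseq s 2%N) 1%N) c)%:E)%E.
have hK : (K <= ((2^-1) ^+ s * 3)%:E)%E := Kall R s.
have K0 : (0 <= K)%E by apply: esum_ge0 => d _; rewrite lee_fin (wa_ge0 R).
have Z00 : (0 <= Z0)%E by apply: esum_ge0 => d _; rewrite lee_fin gz_ge0.
have Z0fin : Z0 \is a fin_num.
  rewrite ge0_fin_numE //; apply: (le_lt_trans (Z0_le R s)).
  apply: (le_lt_trans (lee_wpmul2l _ hK)); first by rewrite lee_fin exprn_ge0.
  by rewrite -EFinM ltry.
have hW : (W <= Z1 - Z0)%E by rewrite leeBrDl //; exact: Z1_ge.
rewrite (esumID (chains s.+1 3)); last by move=> c _; rewrite lee_fin fL_ge0.
have h3 : (\esum_(c in chains s.+1 2 `&` chains s.+1 3) (fL R s c)%:E <= W)%E.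
  apply: (le_trans _ (E3_le R s)).
  apply: esum_sub_le; last by move=> c _; rewrite lee_fin fL_ge0.
  by move=> c [].
have h2 := E2_le R s.
have h2' : ((2^-1)%:E * K <= ((2 ^+ s.+1)^-1 * 3)%:E)%E.
  apply: le_trans (lee_wpmul2l _ hK) _; first by rewrite lee_fin invr_ge0.
  by rewrite -EFinM lee_fin exprSr invfM -exprVn mulrA [X in (X * 3)%R]mulrC.
rewrite -addeA addeC; apply: leeD.
  exact: le_trans h2 h2'.
exact: le_trans h3 hW.
Qed.
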